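(* If $n\ge3$ and $L$ is a left ideal or a suffix-closed language with $n$ quotients, then $\sigma(L)\le n^{n-1}+n-1$.
   Context: A left ideal is a nonempty $L\subseteq\Sigma^*$ with $L=\Sigma^*L$; $L$ is suffix-closed if $w\in L$ implies every suffix of $w$ is in $L$. The quotients of $L$ are $w^{-1}L=\{x: wx\in L\}$. $\sigma(L)$ is the cardinality of the syntactic semigroup $\Sigma^+/\approx_L$, where $x\approx_L y$ iff $uxv\in L\Leftrightarrow uyv\in L$ for all $u,v$ (equivalently, the size of the transition semigroup of the minimal DFA of $L$). *)

(* Defs.v *)
From mathcomp Require Import all_boot.
Set Implicit Arguments. Unset Strict Implicit. Unset Printing Implicit Defensive.

Definition lang (T : finType) := seq T -> Prop.

Definition left_ideal (T : finType) (L : lang T) : Prop :=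
  (exists w, L w) /\ (forall u w, L w -> L (u ++ w)).

Definition suffix_closed (T : finType) (L : lang T) : Prop :=
  forall u w, L (u ++ w) -> L w.

Definition quotient (T : finType) (L : lang T) (w : seq T) : lang T :=
  fun x => L (w ++ x).

Definition same_lang (T : finType) (L1 L2 : lang T) : Prop :=
  forall x, L1 x <-> L2 x.

Definition has_n_quotients (T : finType) (L : lang T) (n : nat) : Prop :=
  exists ws : seq (seq T),
    size ws = n /\
    (forall i j, i < n -> j < n ->
        same_lang (quotient L (nth [::] ws i)) (quotient L (nth [::] ws j)) -> i = j) /\
    (forall w, exists2 i, i < n & same_lang (quotient L w) (quotient L (nth [::] ws i))).

Definition synt_eq (T : finType) (L : lang T) (x y : seq T) : Prop :=
  forall u v, L (u ++ x ++ v) <-> L (u ++ y ++ v).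

(* sigma(L) <= N : the syntactic semigroup Sigma^+ / ~_L has at most N classes,
   i.e. at most N nonempty words represent all classes of nonempty words. *)
Definition synt_semigroup_size_le (T : finType) (L : lang T) (N : nat) : Prop :=
  exists reps : seq (seq T),
    size reps <= N /\ all (fun r => r != [::]) reps /\
    (forall x : seq T, x != [::] -> exists2 r, r \in reps & synt_eq L x r).

(* Main.v *)
Require Import Defs.
From mathcomp Require Import all_boot.
From mathcomp Require Import zify.
From Stdlib Require Import ClassicalEpsilon.
Set Implicit Arguments. Unset Strict Implicit. Unset Printing Implicit Defensive.

Lemma binom_lb e k :
  2 * k ^ e.+2 + 2 * e.+2 * k ^ e.+1 + e.+2 * e.+1 * k ^ e <= 2 * (k.+1) ^ e.+2.
Proof.
elim: e => [|e IH]; first by rewrite !expnS expn0; nia.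
move: IH; rewrite !expnS. set Z := k ^ e. set Y := k.+1 ^ e. nia.
Qed.

Definition phi (n k : nat) := k ^ (n - 2) * k.+1.

Lemma step1 e k : 1 <= k <= e.+1 ->
  3 * (k ^ e.+1 * k.+1) + 2 * k ^ e.+2 <= 2 * (k.+1) ^ e.+2.
Proof.
move=> /andP[k1 ke]. have B := binom_lb e k.
have H : 3 * k * k + k <= 2 * e.+1 * k + e.+1 * e.+1 + e.+1 by nia.
move: B; rewrite !expnS; set Z := k ^ e.
have : (3 * k * k + k) * Z <= (2 * e.+1 * k + e.+1 * e.+1 + e.+1) * Z by apply: leq_mul.
nia.
Qed.

Lemma telescope E j : 1 <= E -> j <= E ->
  3 * \sum_(1 <= k < j.+1) phi E.+2 k + 2 <= 2 * j.+1 ^ E.+1.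
Proof.
move=> E1; elim: j => [|j IH] Hj /=.
  rewrite big_geq //. by rewrite exp1n.
rewrite big_nat_recr //= mulnDr -addnAC.
have := IH (ltnW Hj).
case: E E1 Hj IH => // e _ Hj IH.
have := @step1 e j.+1 Hj. rewrite /phi subn2 /=.
nia.
Qed.

Lemma numeric n : 3 <= n ->
  phi n n + \sum_(1 <= k < n) phi n k <= 2 * (n ^ n.-1 + n - 1).
Proof.
move=> n3.
case: n n3 => [|[|[|[|[|n]]]]] // _.
- by rewrite /phi unlock; vm_compute.
- by rewrite /phi unlock; vm_compute.
rewrite big_nat_recr //=.
have T := @telescope n.+3 n.+3 isT (leqnn _).
have B := binom_lb n.+1 n.+4.
move: T B; rewrite /phi /=.
have -> : n.+4.+1 - 2 = n.+3 by rewrite subn2.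
move: (\sum_(1 <= k < n.+4) k ^ n.+3 * k.+1) => S.
rewrite !expnS.
move: (n.+4.+1 ^ n.+1) (n.+4 ^ n.+1) => A W.
move=> T B.
have P : 0 <= W by [].
nia.
Qed.

Lemma foldr_const (T : finType) (D : {pred T}) c :
  foldr muln 1 [seq c | x in D] = c ^ #|D|.
Proof.
rewrite cardE /image_mem; elim: (enum D) => //= x s ->; by rewrite expnS.
Qed.

Lemma card_bigcup_le (I T : finType) (P : {pred I}) (G : I -> {set T}) :
  #|\bigcup_(i in P) G i| <= \sum_(i in P) #|G i|.
Proof.
apply: (big_ind2 (fun (A : {set T}) k => #|A| <= k)); first by rewrite cards0.
  move=> A1 k1 A2 k2 H1 H2; apply: leq_trans (leq_card_setU A1 A2) _.
  exact: leq_add.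
by [].
Qed.

Section Comb.
Variables (Q : finType) (r : rel Q) (z : Q).
Hypotheses (rR : reflexive r) (rA : antisymmetric r) (rT : transitive r)
  (rz : forall x, r z x).

Definition up p := [set x | r p x].

Lemma two_pairs p :
  2 * #|[set u : Q * Q | (r p u.1) && (r p u.2) && r u.1 u.2]| <= #|up p| * (#|up p|).+1.
Proof.
set C := [set u : Q * Q | _].
set sw := fun u : Q * Q => (u.2, u.1).
have swI : injective sw by move=> [x1 y1] [x2 y2] [-> ->].
set Ct := sw @: C.
have cCt : #|Ct| = #|C| by rewrite card_imset.
have H1 : C :|: Ct \subset setX (up p) (up p).
  apply/subsetP => -[x y]; rewrite !inE => /orP[|/imsetP[[x' y'] Hc [-> ->]]].
    by move=> /andP[/andP[-> ->] _].
  by move: Hc; rewrite !inE /= => /andP[/andP[-> ->] _].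
have H2 : C :&: Ct \subset [set (x, x) | x in up p].
  apply/subsetP => -[x y]; rewrite !inE => /andP[Hc /imsetP[[x' y'] Hc' [Ex Ey]]].
  subst x' y'. move: Hc Hc'; rewrite !inE /= => /andP[/andP[px _] xy] /andP[_ yx].
  have exy : x = y by apply: rA; rewrite xy yx.
  subst y. apply/imsetP; exists x => //; by rewrite inE.
have := cardsUI C Ct. rewrite cCt => E.
have := subset_leq_card H1; rewrite cardsX => L1.
have := subset_leq_card H2; move=> L2.
have L3 := leq_imset_card (fun x => (x, x)) (up p).
nia.
Qed.



Lemma G_bound p a b : a != z -> b != z -> a != b ->
  2 * #|[set f : {ffun Q -> Q} | (f z == p) && [forall x, r p (f x)] && r (f a) (f b)]|
    <= phi #|Q| #|up p|.
Proof.
move=> az bz ab.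
set G := [set f : {ffun Q -> Q} | _].
set C := [set u : Q * Q | (r p u.1) && (r p u.2) && r u.1 u.2].
set D := ~: (z |: [set a; b]).
set PF := [set g : {ffun Q -> Q} | g \in pfamily p D (fun _ => up p)].
set h := fun f : {ffun Q -> Q} => ((f a, f b), [ffun x => if x \in D then f x else p]).
have hI : {in G &, injective h}.
  move=> f1 f2; rewrite !inE => /andP[/andP[/eqP f1z _] _] /andP[/andP[/eqP f2z _] _].
  move=> [Ea Eb Eg]; apply/ffunP => x.
  have := congr1 (fun g : {ffun Q -> Q} => g x) Eg; rewrite !ffunE.
  case: ifP => // xD _.
  move: xD; rewrite !inE => /negbFE /or3P[] /eqP ->.
  - by rewrite f1z f2z.
  - by [].
  - by [].
have hS : h @: G \subset setX C PF.
  apply/subsetP => u /imsetP[f]; rewrite inE => /andP[/andP[_ /forallP fp] fab] ->.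
  rewrite !inE /= fp fab /=. rewrite (fp b) /=.
  apply/forallP => x; rewrite ffunE; case: ifP => xD.
    by rewrite inE fp.
  by rewrite inE.
have cD : #|D| = #|Q| - 3.
  have := cardsC (z |: [set a; b]).
  rewrite -/D cardsU1 cards2 ab !inE negb_or eq_sym az eq_sym bz /=.
  lia.
have cPF : #|PF| <= #|up p| ^ (#|Q| - 3).
  rewrite cardsE card_pfamily foldr_const cD //.
have nQ : 3 <= #|Q|.
  have := subset_leq_card (subsetT (z |: [set a; b])).
  by rewrite cardsT cardsU1 cards2 ab !inE negb_or eq_sym az eq_sym bz.
have := subset_leq_card hS; rewrite card_in_imset // cardsX => L.
have T2 := two_pairs p.
rewrite /phi.
have -> : #|Q| - 2 = (#|Q| - 3).+1 by lia.
rewrite expnS.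
move: T2 L cPF; rewrite -/C.
move: #|up p| #|C| #|PF| #|G| (#|up p| ^ (#|Q| - 3)) => m c pf g M.
move=> T2 L cPF.
have : 2 * g <= 2 * c * pf by rewrite -mulnA leq_mul2l.
move=> H.
have : 2 * c * pf <= m * m.+1 * M by apply: leq_mul.
nia.
Qed.


Lemma phi_mono n i j : i <= j -> phi n i <= phi n j.
Proof.
move=> ij; rewrite /phi; apply: leq_mul => //.
case: (n - 2) => [|e]; first by rewrite !expn0.
by rewrite leq_exp2r.
Qed.

Lemma up_lt p q : r p q -> p != q -> #|up q| < #|up p|.
Proof.
move=> pq npq; apply: proper_card; apply/properP; split.
  apply/subsetP => x; rewrite !inE => qx; exact: rT qx.
exists p; rewrite !inE ?rR //.
apply/negP => qp; move/negP: npq; apply; apply/eqP; apply: rA; by rewrite pq qp.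
Qed.

Lemma sort_bound k : forall S : {set Q}, z \notin S -> #|S| = k ->
  \sum_(p in S) phi #|Q| #|up p| <= \sum_(#|Q| - k <= i < #|Q|) phi #|Q| i.
Proof.
elim: k => [|k IH] S zS cS.
  by move/cards0_eq: cS => ->; rewrite big_set0.
have [p0 p0S] : {p0 | p0 \in S}.
  by apply/sigW; apply/set0Pn; rewrite -card_gt0 cS.
case: (arg_minnP (fun p => #|up p|) p0S) => p pS pmin.
have {}pS : p \in S := pS.
have {}pmin : forall j, j \in S -> #|up p| <= #|up j| := pmin.
have kn : k.+1 <= #|Q|.-1.
  rewrite -cS -(cardsC1 z); apply: subset_leq_card; apply/subsetP => x xS.
  rewrite !inE; apply/negP => /eqP xz; subst x; by rewrite xS in zS.
have mp : #|up p| <= #|Q| - k.+1.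
  have dis : [disjoint up p & (z |: (S :\ p))].
    rewrite disjoint_subset; apply/subsetP => x; rewrite !inE => px.
    rewrite negb_or; apply/andP; split.
      apply/negP => /eqP xz; subst x.
      have : p = z by apply: rA; rewrite px rz.
      by move=> E; move: zS; rewrite -E pS.
    apply/negP => /andP[xp xS]; have := up_lt px; rewrite eq_sym xp => /(_ isT).
    by rewrite ltnNge pmin.
  move: (leq_card_setU (up p) (z |: (S :\ p))) => [_]; rewrite dis => /eqP E.
  have := max_card (up p :|: (z |: (S :\ p))).
  rewrite E cardsU1 !inE negb_and (negbTE zS) orbT /= add1n.
  have := cardsD1 p S; rewrite pS cS add1n => -[<-].
  lia.
rewrite (big_setD1 p pS).
rewrite big_ltn; last by lia.
have -> : (#|Q| - k.+1).+1 = #|Q| - k by lia.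
apply: leq_add; first exact: phi_mono.
apply: IH.
  by rewrite !inE negb_and zS orbT.
by have := cardsD1 p S; rewrite pS cS add1n => -[<-].
Qed.


Definition monos := [set f : {ffun Q -> Q} | [forall x, forall y, r x y ==> r (f x) (f y)]].

Lemma mono_count_nonanti a b : a != z -> b != z -> a != b -> r a b ->
  2 * #|monos| <= phi #|Q| #|Q| + \sum_(1 <= i < #|Q|) phi #|Q| i.
Proof.
move=> az bz ab rab.
pose G p := [set f : {ffun Q -> Q} | (f z == p) && [forall x, r p (f x)] && r (f a) (f b)].
have sub : monos \subset \bigcup_(p in predT) G p.
  apply/subsetP => f; rewrite inE => /forallP fm.
  apply/bigcupP; exists (f z) => //.
  rewrite inE eqxx /=; apply/andP; split.
    by apply/forallP => x; exact: (implyP (forallP (fm z) x) (rz x)).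
  exact: (implyP (forallP (fm a) b) rab).
have L1 := leq_trans (subset_leq_card sub) (card_bigcup_le _ G).
have L2 : 2 * #|monos| <= \sum_(p in predT) phi #|Q| #|up p|.
  apply: leq_trans (leq_mul (leqnn 2) L1) _.
  rewrite big_distrr /=; apply: leq_sum => p _; exact: G_bound.
apply: leq_trans L2 _.
rewrite (bigD1 z) //=.
have -> : #|up z| = #|Q| by apply/eqP; rewrite eqn_leq max_card /=; apply: subset_leq_card; apply/subsetP => x _; rewrite inE rz.
rewrite leq_add2l.
have -> : \sum_(i in predT | i != z) phi #|Q| #|up i| = \sum_(i in [set~ z]) phi #|Q| #|up i|.
  by apply: eq_bigl => x; rewrite !inE.
have nz : 0 < #|Q| by apply/card_gt0P; exists z.
have := @sort_bound #|Q|.-1 [set~ z]; rewrite !inE eqxx cardsC1 => /(_ isT erefl).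
by have -> : #|Q| - #|Q|.-1 = 1 by lia.
Qed.

Lemma mono_count_anti : (forall a b, a != z -> b != z -> r a b -> a = b) ->
  #|monos| <= #|Q| ^ #|Q|.-1 + #|Q| - 1.
Proof.
move=> anti.
set A := [set f : {ffun Q -> Q} | f \in pfamily z [set~ z] (fun _ => predT : {pred Q})].
set B := (fun p : Q => [ffun _ : Q => p] : {ffun Q -> Q}) @: [set~ z].
have sub : monos \subset A :|: B.
  apply/subsetP => f; rewrite inE => /forallP fm.
  have [fz|fz] := eqVneq (f z) z.
    rewrite inE; apply/orP; left; rewrite inE; apply/forallP => x.
    rewrite /= !inE; case: eqVneq => [->|] /=; last by []. by rewrite inE fz.
  rewrite inE; apply/orP; right; apply/imsetP; exists (f z); first by rewrite !inE.
  apply/ffunP => x; rewrite ffunE.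
  have rx : r (f z) (f x) := implyP (forallP (fm z) x) (rz x).
  have fxz : f x != z.
    apply/negP => /eqP e; move: rx; rewrite e => rzz.
    by move/negP: fz; apply; apply/eqP; apply: rA; rewrite rzz rz.
  by apply/esym/anti.
apply: leq_trans (subset_leq_card sub) _.
apply: leq_trans (leq_card_setU A B) _.
have cA : #|A| <= #|Q| ^ #|Q|.-1.
  rewrite cardsE card_pfamily foldr_const cardsC1.
  by rewrite (eq_card (fun x => _ : x \in (predT : {pred Q}) = (x \in Q))).
have cB : #|B| <= #|Q|.-1 by rewrite -(cardsC1 z); apply: leq_imset_card.
have nz : 0 < #|Q| by apply/card_gt0P; exists z.
lia.
Qed.


Lemma mono_count : 3 <= #|Q| -> #|monos| <= #|Q| ^ #|Q|.-1 + #|Q| - 1.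
Proof.
move=> n3.
case: (boolP [exists a, exists b, (a != z) && (b != z) && (a != b) && r a b]).
  move=> /existsP[a /existsP[b /andP[/andP[/andP[az bz] ab] rab]]].
  have := mono_count_nonanti az bz ab rab.
  have := numeric n3. lia.
move=> H; apply: mono_count_anti => a b az bz rab.
apply/eqP; apply/negP => nab; move/negP: H; apply.
apply/existsP; exists a; apply/existsP; exists b; rewrite az bz rab andbT /=; exact/negP.
Qed.

End Comb.


Definition pb (P : Prop) : bool := if excluded_middle_informative P then true else false.
Lemma pbP (P : Prop) : reflect P (pb P).
Proof. rewrite /pb; case: excluded_middle_informative => H; by constructor. Qed.

Section Lang.
Variables (T : finType) (L : lang T) (n : nat) (ws : seq (seq T)).
Hypotheses (n0 : 0 < n) (sz : size ws = n)
  (dist : forall i j, i < n -> j < n ->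
     same_lang (quotient L (nth [::] ws i)) (quotient L (nth [::] ws j)) -> i = j)
  (cov : forall w, exists2 i, i < n & same_lang (quotient L w) (quotient L (nth [::] ws i))).

Definition K (i : 'I_n) := quotient L (nth [::] ws i).
Definition dflt : 'I_n := Ordinal n0.
Definition cls (w : seq T) : 'I_n := odflt dflt [pick i : 'I_n | pb (same_lang (quotient L w) (K i))].

Lemma cls_spec w : same_lang (quotient L w) (K (cls w)).
Proof.
rewrite /cls; case: pickP => [i /pbP //|none].
have [i lin Hi] := cov w.
have := none (Ordinal lin); move/pbP => []; exact: Hi.
Qed.

Lemma sl_sym (A B : lang T) : same_lang A B -> same_lang B A.
Proof. by move=> H x; split => /H. Qed.
Lemma sl_trans (A B C : lang T) : same_lang A B -> same_lang B C -> same_lang A C.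
Proof. move=> H1 H2 x; split => [/H1/H2|/H2/H1] //. Qed.

Lemma K_inj (i j : 'I_n) : same_lang (K i) (K j) -> i = j.
Proof. move=> H; apply: val_inj; exact: dist (ltn_ord i) (ltn_ord j) H. Qed.

Lemma cls_eq u v : same_lang (quotient L u) (quotient L v) -> cls u = cls v.
Proof.
move=> H; apply: K_inj.
apply: sl_trans (sl_sym (cls_spec u)) _.
apply: sl_trans H (cls_spec v).
Qed.

Definition tr (x : seq T) : {ffun 'I_n -> 'I_n} := [ffun i : 'I_n => cls (nth [::] ws i ++ x)].

Lemma trK x (i : 'I_n) w : K (tr x i) w <-> K i (x ++ w).
Proof.
rewrite ffunE; have H := cls_spec (nth [::] ws i ++ x) w.
rewrite /K /quotient -catA in H *; split => [/H|/H] //.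
Qed.

Lemma tr_synt x y : tr x = tr y -> synt_eq L x y.
Proof.
move=> E u v.
have Hu := cls_spec u.
split.
  move=> /(Hu (x ++ v)) /(trK x) ; rewrite E => /(trK y) /(Hu (y ++ v)); by [].
move=> /(Hu (y ++ v)) /(trK y) ; rewrite -E => /(trK x) /(Hu (x ++ v)); by [].
Qed.

Definition le (i j : 'I_n) := pb (forall w, K i w -> K j w).

Lemma le_refl : reflexive le. Proof. by move=> i; apply/pbP. Qed.
Lemma le_trans' : transitive le.
Proof. move=> j i k /pbP H1 /pbP H2; apply/pbP => w /H1 /H2 //. Qed.
Lemma le_anti : antisymmetric le.
Proof. move=> i j /andP[/pbP H1 /pbP H2]; apply: K_inj => w; split; [exact: H1|exact: H2]. Qed.
Lemma le_tr x i j : le i j -> le (tr x i) (tr x j).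
Proof. move=> /pbP H; apply/pbP => w /trK /H /trK //. Qed.

Definition z0 := cls [::].
Lemma Kz w : K z0 w <-> L w.
Proof. split; [by move/(cls_spec [::] w)| by move=> H; apply/(cls_spec [::] w)]. Qed.

Definition wordof (f : {ffun 'I_n -> 'I_n}) : seq T :=
  match excluded_middle_informative (exists x, x != [::] /\ tr x = f) with
  | left H => proj1_sig (constructive_indefinite_description _ H)
  | right _ => [::] end.

Lemma final (r : rel 'I_n) : reflexive r -> antisymmetric r -> transitive r ->
  (forall x, r z0 x) -> 3 <= n ->
  (forall x i j, r i j -> r (tr x i) (tr x j)) ->
  synt_semigroup_size_le L (n ^ n.-1 + n - 1).
Proof.
move=> rR rA rT' rz n3 rtr.
pose R := [set f | pb (exists x, x != [::] /\ tr x = f)].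
have sub : R \subset monos r.
  apply/subsetP => f; rewrite !inE => /pbP[x [_ <-]].
  by apply/forallP => i; apply/forallP => j; apply/implyP; exact: rtr.
have cR : #|R| <= n ^ n.-1 + n - 1.
  have := mono_count rR rA rT' rz; rewrite card_ord => /(_ n3).
  exact: leq_trans (subset_leq_card sub).
exists [seq wordof f | f <- enum R]; split; [|split].
- by rewrite size_map -cardE.
- apply/allP => w /mapP[f]; rewrite mem_enum inE => /pbP Hf ->.
  rewrite /wordof; case: excluded_middle_informative => // H.
  by case: (constructive_indefinite_description _ H) => x [].
- move=> x xn; exists (wordof (tr x)).
    apply/mapP; exists (tr x) => //; rewrite mem_enum inE; apply/pbP; by exists x.
  apply: tr_synt.
  rewrite /wordof; case: excluded_middle_informative => H; last by exfalso; apply: H; exists x.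
  by case: (constructive_indefinite_description _ H) => y [_ ->].
Qed.

End Lang.

Theorem lemma5 (T : finType) (L : lang T) (n : nat) :
  3 <= n ->
  (left_ideal L \/ suffix_closed L) ->
  has_n_quotients L n ->
  synt_semigroup_size_le L (n ^ n.-1 + n - 1).
Proof.
move=> n3 hL [ws [sz [dist cov]]].
have n0 : 0 < n by apply: leq_trans n3.
have Kz' := @Kz T L n ws n0 cov.
case: hL => [[_ HL]|HS].
- apply: (@final T L n ws n0 cov (@le T L n ws)) => //.
  + exact: le_refl.
  + exact: (@le_anti T L n ws dist).
  + exact: le_trans'.
  + move=> j; apply/pbP => w /Kz' Hw; rewrite /K /quotient; exact: HL.
  + move=> x i j; exact: le_tr.
- apply: (@final T L n ws n0 cov (fun i j => @le T L n ws j i)) => //.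
  + move=> i; exact: le_refl.
  + move=> i j /andP[h1 h2]; apply: (@le_anti T L n ws dist); by rewrite h1 h2.
  + move=> j i k h1 h2; exact: le_trans' h2 h1.
  + move=> j; apply/pbP => w Hw; apply/Kz'; exact: (HS _ _ Hw).
  + move=> x i j; exact: le_tr.
Qed.
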